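(* Let $G=(L,R,E)$ be a bipartite graph, $f:2^E\to\mathbb{R}_{\ge0}$ non-negative, monotonically non-decreasing and submodular, $p\in(0,1)$, and run $\mathrm{SIMULATE2}$ (see context) to obtain $M,N,S$ and $w$. For any $t>0$, with $\alpha=\frac{p}{1-p}$ and $\theta=\frac{t+\alpha}{\alpha}$, $$\mathbb{E}[f(S)]\ge\Big(\frac1\theta-\frac{1}{t\,p^2}\Big)\mathbb{E}[w(S)].$$
   Context: $f_M(e)=f(M\cup\{e\})-f(M)$. $\mathrm{SIMULATE2}$: start with $M=N=\emptyset$ and a working copy of $E$. While there is an edge $e^*=(\ell^*,r^* )$ in the working edge set such that $M\cup\{e^*\}$ is a matching, take such an edge maximizing $f_M(e^* )$ (fixed tie-breaking); let $M_{e^*}$ be the current $M$; flip an independent coin with head probability $p$; on heads add $e^*$ to $M$, otherwise to $N$; then remove all edges incident to $\ell^*$ from the working edge set. Finally let $S$ be the set of edges $(\ell,r)\in N$ that are the only edge of $N$ incident to $r$. Define $w(e)=f_{M_e}(e)$ for every edge $e$ selected during the loop and $w(e)=0$ for all other edges; $w(T)=\sum_{e\in T}w(e)$. *)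

(* Defs.v *)
From mathcomp Require Import all_boot all_order all_algebra.
Set Implicit Arguments. Unset Strict Implicit. Unset Printing Implicit Defensive.
Import Order.TTheory GRing.Theory Num.Theory.
Local Open Scope ring_scope.

Section Simulate2.
Variables (R : realFieldType) (V1 V2 : finType).
(* f : 2^E -> R, represented on all edge sets of the complete bipartite type *)
Variable f : {set V1 * V2} -> R.
(* fixed tie-breaking: an injective rank on edges (smaller rank wins) *)
Variable rank : V1 * V2 -> nat.

Definition is_matching (A : {set V1 * V2}) : bool :=
  [forall e1 in A, forall e2 in A,
     (e1 != e2) ==> ((e1.1 != e2.1) && (e1.2 != e2.2))].

Definition gain (M : {set V1 * V2}) (e : V1 * V2) : R := f (e |: M) - f M.

(* state of the loop: (M, N, working edge set, w) *)
Definition state := ({set V1 * V2} * {set V1 * V2} * {set V1 * V2} * {ffun V1 * V2 -> R})%type.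

Definition candidates (st : state) : {set V1 * V2} :=
  let: (M, _, W, _) := st in [set e in W | is_matching (e |: M)].

Definition is_choice (st : state) (e : V1 * V2) : bool :=
  let: (M, _, _, _) := st in
  (e \in candidates st) &&
  [forall e' in candidates st,
     (gain M e' < gain M e) || ((gain M e' == gain M e) && (rank e <= rank e')%N)].

(* one iteration of the while loop; the coin flipped when the left vertex l
   is processed is c l (each left vertex is processed at most once) *)
Definition step (c : {ffun V1 -> bool}) (st : state) : state :=
  let: (M, N, W, w) := st in
  match [pick e | is_choice st e] with
  | None => st
  | Some e =>
      let g := gain M e in
      let w' := [ffun x => if x == e then g else w x] in
      let W' := [set x in W | x.1 != e.1] in
      if c e.1 then (e |: M, N, W', w') else (M, e |: N, W', w')
  end.

Definition run (E : {set V1 * V2}) (c : {ffun V1 -> bool}) : state :=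
  iter #|E| (step c) (set0, set0, E, [ffun => 0]).

Definition sim_M E c : {set V1 * V2} := let: (M, _, _, _) := run E c in M.
Definition sim_N E c : {set V1 * V2} := let: (_, N, _, _) := run E c in N.
Definition sim_w E c : {ffun V1 * V2 -> R} := let: (_, _, _, w) := run E c in w.
Definition sim_S E c : {set V1 * V2} :=
  let N := sim_N E c in
  [set e in N | [forall e' in N, (e'.2 == e.2) ==> (e' == e)]].

End Simulate2.

Definition coin_prob (R : realFieldType) (V1 : finType) (p : R) (c : {ffun V1 -> bool}) : R :=
  \prod_(l : V1) (if c l then p else 1 - p).

Definition Ex (R : realFieldType) (V1 : finType) (p : R) (X : {ffun V1 -> bool} -> R) : R :=
  \sum_(c : {ffun V1 -> bool}) coin_prob p c * X c.

(* Main.v *)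
Require Import Defs.
From mathcomp Require Import all_boot all_order all_algebra.
From mathcomp Require Import ring lra.
Set Implicit Arguments. Unset Strict Implicit. Unset Printing Implicit Defensive.
Import Order.TTheory GRing.Theory Num.Theory.
Local Open Scope ring_scope.

Section ExLemmas.
Variables (R : realFieldType) (V1 : finType) (p : R).
Hypotheses (p0 : 0 <= p) (p1 : p <= 1).
Implicit Types (X Y : {ffun V1 -> bool} -> R) (c : {ffun V1 -> bool}) (l : V1).

Lemma coin_prob_ge0 (c : {ffun V1 -> bool}) : 0 <= coin_prob p c.
Proof.
rewrite /coin_prob; apply: prodr_ge0 => l _; case: (c l) => //; by rewrite subr_ge0.
Qed.

Lemma sum_coin_prob : \sum_(c : {ffun V1 -> bool}) coin_prob p c = 1.
Proof.
rewrite /coin_prob -(bigA_distr_bigA (fun (l : V1) (b : bool) => if b then p else 1 - p)) /=.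
by apply: big1 => l _; rewrite big_bool /= addrC subrK.
Qed.

Lemma Ex_const k : Ex p (fun _ : {ffun V1 -> bool} => k) = k.
Proof. by rewrite /Ex -mulr_suml sum_coin_prob mul1r. Qed.

Lemma Ex_le X Y : (forall c, X c <= Y c) -> Ex p X <= Ex p Y.
Proof.
move=> H; rewrite /Ex; apply: ler_sum => c _; apply: ler_wpM2l; [exact: coin_prob_ge0|exact: H].
Qed.

Lemma ExD X Y : Ex p (fun c => X c + Y c) = Ex p X + Ex p Y.
Proof. by rewrite /Ex -big_split /=; apply: eq_bigr => c _; rewrite mulrDr. Qed.

Lemma ExZ k X : Ex p (fun c => k * X c) = k * Ex p X.
Proof. by rewrite /Ex mulr_sumr; apply: eq_bigr => c _; rewrite mulrCA. Qed.

Definition upd (c : {ffun V1 -> bool}) (l : V1) (b : bool) : {ffun V1 -> bool} :=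
  [ffun x => if x == l then b else c x].

Definition gp (l : V1) (c : {ffun V1 -> bool}) : R :=
  \prod_(x | x != l) (if c x then p else 1 - p).

Lemma coin_split l c : coin_prob p c = (if c l then p else 1 - p) * gp l c.
Proof. by rewrite /coin_prob (bigD1 l). Qed.

Lemma gp_upd l c b : gp l (upd c l b) = gp l c.
Proof. by apply: eq_bigr => x /negPf H; rewrite /upd ffunE H. Qed.

Lemma upd_upd c l b b' : upd (upd c l b) l b' = upd c l b'.
Proof. by apply/ffunP => x; rewrite !ffunE; case: eqP. Qed.

Lemma upd_id c l : upd c l (c l) = c.
Proof. by apply/ffunP => x; rewrite !ffunE; case: eqP => // ->. Qed.

Lemma upd_at c l b : upd c l b l = b.
Proof. by rewrite ffunE eqxx. Qed.

Lemma Ex_split l X :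
  Ex p X = p * Ex p (fun c => X (upd c l true)) + (1 - p) * Ex p (fun c => X (upd c l false)).
Proof.
pose tg c := upd c l (~~ c l).
have tgK : involutive tg.
  by move=> c; rewrite /tg upd_upd upd_at negbK upd_id.
have tginj : injective tg := inv_inj tgK.
have key : forall Y : {ffun V1 -> bool} -> R,
    \sum_(c : {ffun V1 -> bool} | ~~ c l) Y c = \sum_(c : {ffun V1 -> bool} | c l) Y (tg c).
  move=> Y; rewrite (reindex_inj tginj) /=; apply: eq_bigl => c.
  by rewrite /tg upd_at negbK.
have gen : forall b, Ex p (fun c => X (upd c l b)) = \sum_(c : {ffun V1 -> bool} | c l) gp l c * X (upd c l b).
  move=> b; rewrite /Ex (bigID (fun c => c l)) /= key.
  rewrite -big_split /=; apply: eq_bigr => c cl.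
  rewrite !(coin_split l) cl /tg upd_at cl /= gp_upd upd_upd.
  by rewrite -!mulrDl addrCA subrr addr0 mul1r.
rewrite !gen /Ex (bigID (fun c => c l)) /= key !mulr_sumr; congr (_ + _).
  by apply: eq_bigr => c cl; rewrite (coin_split l) cl mulrA; congr (_ * X _); apply/ffunP => x;
     rewrite ffunE; case: eqP => // ->.
apply: eq_bigr => c cl; rewrite (coin_split l) /tg upd_at cl /= gp_upd mulrA.
by congr (_ * X _); apply/ffunP => x; rewrite !ffunE.
Qed.

Lemma Ex_ext X Y : (forall c, X c = Y c) -> Ex p X = Ex p Y.
Proof. by move=> H; rewrite /Ex; apply: eq_bigr => c _; rewrite H. Qed.

End ExLemmas.

Section Proc.
Variables (R : realFieldType) (V1 V2 : finType) (E : {set V1 * V2})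
  (f : {set V1 * V2} -> R) (rank : V1 * V2 -> nat).
Hypothesis fpos : forall A : {set V1 * V2}, A \subset E -> 0 <= f A.
Hypothesis fmono : forall A B : {set V1 * V2}, A \subset B -> B \subset E -> f A <= f B.
Hypothesis fsub : forall A B : {set V1 * V2}, A \subset E -> B \subset E ->
  f (A :|: B) + f (A :&: B) <= f A + f B.

Local Notation T := (V1 * V2)%type.
Implicit Types (M N W A B X : {set T}) (w h : {ffun T -> R}) (x e a : T) (c : {ffun V1 -> bool}).

Lemma gain_ge0 A x : A \subset E -> x \in E -> 0 <= gain f A x.
Proof.
move=> AE xE; rewrite /gain subr_ge0; apply: fmono; first exact: subsetUr.
by rewrite subUset sub1set xE AE.
Qed.

Lemma gain_anti A B x : A \subset B -> B \subset E -> x \in E -> gain f B x <= gain f A x.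
Proof.
move=> AB BE xE; have AE := subset_trans AB BE.
case xB: (x \in B).
  have -> : gain f B x = 0 by rewrite /gain (setUidPr _) ?subrr // sub1set.
  exact: gain_ge0.
have H := fsub (A := x |: A) (B := B).
have e1 : (x |: A) :|: B = x |: B.
  by apply/setP => y; rewrite !inE; case: (y == x) => //=; case yA: (y \in A) => //=;
     rewrite (subsetP AB).
have e2 : (x |: A) :&: B = A.
  apply/setP => y; rewrite !inE; case: (eqVneq y x) => [->|_] /=.
    by rewrite xB; apply/esym/negbTE/negP => /(subsetP AB); rewrite xB.
  by case yA: (y \in A) => //=; rewrite (subsetP AB).
rewrite e1 e2 in H; rewrite /gain.
have : f (x |: B) + f A <= f (x |: A) + f B.
  apply: H => //; by rewrite subUset sub1set xE AE.
by rewrite lerBlDr addrAC -lerBrDr => /le_trans; apply; rewrite addrAC.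
Qed.

Lemma is_matching_sub A B : A \subset B -> is_matching B -> is_matching A.
Proof.
move=> AB /forall_inP H; apply/forall_inP => e1 e1A; apply/forall_inP => e2 e2A.
by have /forall_inP := H e1 (subsetP AB _ e1A); apply; apply: (subsetP AB).
Qed.

Lemma matching_right M e m : is_matching (e |: M) -> m \in M -> m != e -> m.2 != e.2.
Proof.
move=> /forall_inP H mM me.
have /forall_inP := H m (setU1r _ mM).
by move=> /(_ e (setU11 _ _)); rewrite me /= => /andP[].
Qed.

Lemma choice_facts M N W w e : is_choice f rank (M, N, W, w) e ->
  [/\ e \in W, is_matching (e |: M) &
      forall x, x \in candidates (M, N, W, w) -> gain f M x <= gain f M e].
Proof.
rewrite /is_choice /candidates inE => /andP[/andP[eW em] /forall_inP H]; split => //.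
move=> x /H /orP[/ltW //|/andP[/eqP -> _]] //.
Qed.

Definition Wn W e := [set x in W | x.1 != e.1].
Definition wn M w e : {ffun T -> R} := [ffun x => if x == e then gain f M e else w x].
Definition hn M N h e : {ffun T -> R} :=
  [ffun x => if x == e then gain f (M :|: N) e else h x].

Lemma step_some c M N W w e : [pick e | is_choice f rank (M, N, W, w) e] = Some e ->
  step f rank c (M, N, W, w) =
  if c e.1 then (e |: M, N, Wn W e, wn M w e) else (M, e |: N, Wn W e, wn M w e).
Proof. by rewrite /step => ->. Qed.

Lemma step_none c M N W w : [pick e | is_choice f rank (M, N, W, w) e] = None ->
  step f rank c (M, N, W, w) = (M, N, W, w).
Proof. by rewrite /step => ->. Qed.

Definition hupd (s : state R V1 V2) h : {ffun T -> R} :=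
  let: (M, N, W, w) := s in
  match [pick e | is_choice f rank (M, N, W, w) e] with
  | None => h
  | Some e => hn M N h e
  end.

Definition step2 c (sh : state R V1 V2 * {ffun T -> R}) :=
  (step f rank c sh.1, hupd sh.1 sh.2).

Lemma iter_step2_fst n c sh : (iter n (step2 c) sh).1 = iter n (step f rank c) sh.1.
Proof. by elim: n => //= n ->. Qed.

Record Inv M N W w h : Prop := {
  iME : M \subset E; iNE : N \subset E; iWE : W \subset E;
  iWl : forall x a, x \in W -> a \in M :|: N -> x.1 != a.1;
  iG : forall a x, a \in N -> x \in candidates (M, N, W, w) -> gain f M x <= w a;
  iw : forall a, a \in N -> 0 <= w a /\ 0 <= h a;
  iX : forall X, X \subset M :|: N -> \sum_(x in X) h x <= f X - f set0 }.

Lemma e_notin M N W w h e : Inv M N W w h -> e \in W -> e \notin M :|: N.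
Proof. by move=> I eW; apply/negP => /(iWl I eW); rewrite eqxx. Qed.

Lemma iX_step M N W w h e : Inv M N W w h -> e \in W ->
  forall X, X \subset e |: (M :|: N) -> \sum_(x in X) hn M N h e x <= f X - f set0.
Proof.
move=> I eW X XS.
have eE : e \in E by apply: (subsetP (iWE I)).
have MNE : M :|: N \subset E by rewrite subUset (iME I) (iNE I).
case eX: (e \in X); last first.
  have XS' : X \subset M :|: N.
    apply/subsetP => y yX; move: (subsetP XS y yX); rewrite in_setU1 => /orP[/eqP ye|//].
    by move: yX; rewrite ye eX.
  rewrite (eq_bigr (fun x => h x)); first exact: (iX I).
  by move=> y yX; rewrite ffunE; case: eqP => // ye; move: yX; rewrite ye eX.
rewrite (bigD1 e) //= ffunE eqxx.
have XD : X :\ e \subset M :|: N.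
  apply/subsetP => y; rewrite in_setD1 => /andP[ye yX]; move: (subsetP XS y yX).
  by rewrite in_setU1 (negbTE ye).
have -> : \sum_(i in X | i != e) hn M N h e i = \sum_(i in X :\ e) h i.
  apply: eq_big => [y|y]; first by rewrite !inE andbC.
  by rewrite ffunE => /andP[_ /negbTE ->].
have H1 := iX I XD.
have H2 : gain f (M :|: N) e <= gain f (X :\ e) e by apply: gain_anti.
rewrite /gain setD1K // in H2.
move: H1 H2; set a := gain _ _ _; set u := \sum_(i in _) _; move=> H1 H2.
rewrite /a /gain; lra.
Qed.

Lemma inv_step M N W w h e : Inv M N W w h -> is_choice f rank (M, N, W, w) e ->
  Inv (e |: M) N (Wn W e) (wn M w e) (hn M N h e) /\
  Inv M (e |: N) (Wn W e) (wn M w e) (hn M N h e).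
Proof.
move=> I /choice_facts [eW em gmax].
have eE : e \in E by apply: (subsetP (iWE I)).
have eMN := e_notin I eW.
have eM : e \notin M by apply: contra eMN => ?; rewrite inE; apply/orP; left.
have eN : e \notin N by apply: contra eMN => ?; rewrite inE; apply/orP; right.
have WnW : Wn W e \subset W by apply/subsetP => x; rewrite inE => /andP[].
have WnE : Wn W e \subset E := subset_trans WnW (iWE I).
have aNe : forall a, a \in N -> a != e by move=> a aN; apply: contraNneq eN => <-.
have wnN : forall a, a \in N -> wn M w e a = w a /\ hn M N h e a = h a.
  by move=> a /aNe /negbTE ae; rewrite !ffunE ae.
have MNE : M :|: N \subset E by rewrite subUset (iME I) (iNE I).
split; split.
- by rewrite subUset sub1set eE (iME I).
- exact: (iNE I).
- exact: WnE.
- move=> x a; rewrite inE => /andP[xW xe]; rewrite -setUA in_setU1 => /orP[/eqP->//|aMN].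
  exact: (iWl I).
- move=> a x aN; rewrite /candidates inE => /andP[xWn xm].
  have xW := subsetP WnW _ xWn; have xE := subsetP (iWE I) _ xW.
  have xc : x \in candidates (M, N, W, w).
    rewrite /candidates inE xW /=; apply: is_matching_sub xm.
    by rewrite setUCA subsetUr.
  rewrite (wnN a aN).1; apply: le_trans (iG I aN xc).
  by apply: gain_anti => //; [exact: subsetUr | rewrite subUset sub1set eE (iME I)].
- by move=> a aN; rewrite (wnN a aN).1 (wnN a aN).2; exact: (iw I).
- by move=> X; rewrite -setUA; exact: (iX_step I eW).
- exact: (iME I).
- by rewrite subUset sub1set eE (iNE I).
- exact: WnE.
- move=> x a; rewrite inE => /andP[xW xe]; rewrite setUCA in_setU1 => /orP[/eqP->//|aMN].
  exact: (iWl I).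
- move=> a x aN; rewrite /candidates inE => /andP[xWn xm].
  have xW := subsetP WnW _ xWn.
  have xc : x \in candidates (M, N, W, w) by rewrite /candidates inE xW.
  move: aN; rewrite in_setU1 => /orP[/eqP->|aN].
    by rewrite ffunE eqxx; exact: gmax.
  by rewrite (wnN a aN).1; exact: (iG I aN xc).
- move=> a; rewrite in_setU1 => /orP[/eqP->|aN].
    by rewrite !ffunE eqxx; split; apply: gain_ge0 => //; exact: (iME I).
  by rewrite (wnN a aN).1 (wnN a aN).2; exact: (iw I).
- by move=> X; rewrite setUCA; exact: (iX_step I eW).
Qed.


Lemma step_indep c (c' : {ffun V1 -> bool}) M N W w : (forall x, x \in W -> c x.1 = c' x.1) ->
  step f rank c (M, N, W, w) = step f rank c' (M, N, W, w).
Proof.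
move=> H; rewrite /step; case: pickP => [e /choice_facts[eW _ _]|_] //.
by rewrite H.
Qed.

Lemma stepW c M N W w : (step f rank c (M, N, W, w)).1.2 \subset W.
Proof.
rewrite /step; case: pickP => [e _|_] //=.
by case: (c e.1) => /=; apply/subsetP => x; rewrite inE => /andP[].
Qed.

Definition InvS (sh : state R V1 V2 * {ffun T -> R}) : Prop :=
  let: ((M, N, W, w), h) := sh in Inv M N W w h.

Lemma inv_step2 c sh : InvS sh -> InvS (step2 c sh).
Proof.
case: sh => [[[[M N] W] w] h] /= I.
rewrite /step2 /=; case P: [pick e | is_choice f rank (M, N, W, w) e] => [e|].
  have Ce : is_choice f rank (M, N, W, w) e by move: P; case: pickP => // e' He' [<-].
  have [IT IF] := inv_step I Ce; by case: (c e.1).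
by [].
Qed.

Lemma inv_iter n c sh : InvS sh -> InvS (iter n (step2 c) sh).
Proof. by elim: n => //= n IH /IH; apply: inv_step2. Qed.

Lemma iter_indep n c (c' : {ffun V1 -> bool}) (sh : state R V1 V2 * {ffun T -> R}) :
  (forall x, x \in sh.1.1.2 -> c x.1 = c' x.1) ->
  iter n (step2 c) sh = iter n (step2 c') sh.
Proof.
elim: n sh => // n IH [[[[M N] W] w] h] H.
have E1 : step2 c (M, N, W, w, h) = step2 c' (M, N, W, w, h).
  by rewrite /step2; congr (_, _); exact: (@step_indep c c' M N W w H).
rewrite !iterSr E1; apply: IH => x xW; apply: H.
by apply: (subsetP (stepW c' M N W w)).
Qed.


Variable p : R.

Definition coverM M (r : V2) := [exists m in M, m.2 == r].
Definition Sset N : {set T} := [set x in N | [forall x' in N, (x'.2 == x.2) ==> (x' == x)]].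
Definition Xf M N h := \sum_(x : T)
  (if x \in Sset N then (if coverM M x.2 then h x else p * h x) else 0).
Definition Yf N w := \sum_(x in Sset N) w x.
Definition Vf M N w := \sum_(r : V2)
  (if coverM M r then 0 else \big[Order.max/0]_(x | (x \in N) && (x.2 == r)) w x).
Definition Zf M N := f (M :|: N) - f M.

Lemma coverM_U1 M e r : coverM (e |: M) r = (e.2 == r) || coverM M r.
Proof.
rewrite /coverM; apply/existsP/orP => [[m /andP[]]|[er|/existsP[m /andP[mM mr]]]].
- rewrite in_setU1 => /orP[/eqP-> ->|mM mr]; first by left.
  by right; apply/existsP; exists m; rewrite mM.
- by exists e; rewrite setU11.
- by exists m; rewrite (setU1r _ mM).
Qed.

Hypothesis p0 : 0 <= p.
Hypothesis p1 : p <= 1.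

Lemma conv0 (a : R) : p * a + (1 - p) * a - a = 0.
Proof. ring. Qed.

Definition Phi M N w h := Xf M N h - p * (1 - p) * Zf M N - (1 - p) ^+ 2 * Vf M N w
  - (p - (1 - p)) * Yf N w.

Section Chosen.
Variables (M N W : {set T}) (w h : {ffun T -> R}) (e : T).
Hypothesis I : Inv M N W w h.
Hypothesis Ce : is_choice f rank (M, N, W, w) e.

Let eW : e \in W. Proof. by case: (choice_facts Ce). Qed.
Let em : is_matching (e |: M). Proof. by case: (choice_facts Ce). Qed.
Let eE : e \in E. Proof. exact: (subsetP (iWE I)). Qed.
Let eN : e \notin N.
Proof. by apply: contra (e_notin I eW) => ?; rewrite inE; apply/orP; right. Qed.
Let eM : e \notin M.
Proof. by apply: contra (e_notin I eW) => ?; rewrite inE; apply/orP; left. Qed.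
Let covM : coverM M e.2 = false.
Proof.
apply/negbTE/existsP => -[m /andP[mM /eqP me]].
have mne : m != e by apply: contraNneq eM => <-.
by have := matching_right em mM mne; rewrite me eqxx.
Qed.
Let ecand : e \in candidates (M, N, W, w).
Proof. by rewrite /candidates inE eW em. Qed.

Let S1 x : x != e -> x.2 != e.2 -> (x \in Sset (e |: N)) = (x \in Sset N).
Proof.
move=> xe x2; rewrite !inE (negbTE xe) /=; congr (_ && _).
apply: eq_forallb => y; rewrite !inE; case: (eqVneq y e) => [->|_] //=.
by rewrite (negbTE eN) /= eq_sym (negbTE x2).
Qed.

Let S2 x : x != e -> x.2 == e.2 -> x \notin Sset (e |: N).
Proof.
move=> xe x2; rewrite inE; apply/negP => /andP[_ /forall_inP H].
have := H e (setU11 _ _); rewrite eq_sym x2 /= => /eqP ex.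
by move: xe; rewrite ex eqxx.
Qed.

Let Fb := ~~ [exists n in N, n.2 == e.2].

Let S3 : (e \in Sset (e |: N)) = Fb.
Proof.
rewrite inE setU11 /= /Fb; apply/idP/idP.
  move/forall_inP => H; apply/negP => /existsP[n /andP[nN /eqP n2]].
  have := H n (setU1r _ nN); rewrite n2 eqxx /= => /eqP ne.
  by move: eN; rewrite -ne nN.
move=> H; apply/forall_inP => y; rewrite in_setU1 => /orP[/eqP->|yN]; first by apply/implyP.
apply/implyP => y2; exfalso; apply: (negP H); apply/existsP; exists y; by rewrite yN y2.
Qed.

Let eSN : (e \in Sset N) = false.
Proof. by rewrite inE (negbTE eN). Qed.

Let hv := gain f (M :|: N) e.
Let wv := gain f M e.

Lemma dX : p * Xf (e |: M) N (hn M N h e) + (1 - p) * Xf M (e |: N) (hn M N h e) - Xf M N h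
  = if Fb then p * (1 - p) * hv else 0.
Proof.
rewrite /Xf !mulr_sumr -big_split -sumrB /= (bigD1 e) //= big1 ?addr0.
  rewrite !ffunE eqxx eSN S3 covM; case: Fb => /=; rewrite /hv; ring.
move=> x xe; rewrite !ffunE (negbTE xe); case x2: (x.2 == e.2).
  rewrite (negbTE (S2 xe x2)) coverM_U1 (eq_sym e.2) x2 /= (eqP x2) covM.
  by case: (x \in Sset N); ring.
rewrite S1 ?x2 // coverM_U1 (eq_sym e.2) x2 /=.
by case: (x \in Sset N); case: (coverM M x.2); ring.
Qed.

Lemma dY : p * Yf N (wn M w e) + (1 - p) * Yf (e |: N) (wn M w e) - Yf N w
  <= if Fb then (1 - p) * wv else 0.
Proof.
rewrite /Yf [X in _ - X]big_mkcond [X in (1 - p) * X]big_mkcond [X in p * X]big_mkcond /=.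
rewrite !mulr_sumr -big_split -sumrB /= (bigD1 e) //=.
rewrite !ffunE eqxx eSN S3 -[X in _ <= X]addr0; apply: lerD.
  by case: Fb => /=; [rewrite mulr0 add0r subr0 | rewrite !mulr0 !addr0 subr0].
apply: sumr_le0 => x xe; rewrite !ffunE (negbTE xe); case x2: (x.2 == e.2).
  rewrite (negbTE (S2 xe x2)); case xS: (x \in Sset N); last by rewrite !mulr0 addr0 subr0.
  move: xS; rewrite inE => /andP[xN _]; have := (iw I xN).1 => wx0.
  have : 0 <= (1 - p) * w x by apply: mulr_ge0; rewrite ?subr_ge0.
  lra.
by rewrite S1 ?x2 // conv0.
Qed.

Lemma dV : p * Vf (e |: M) N (wn M w e) + (1 - p) * Vf M (e |: N) (wn M w e) - Vf M N w
  <= if Fb then (1 - p) * wv else - (p * wv).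
Proof.
rewrite /Vf !mulr_sumr -big_split -sumrB /= (bigD1 e.2) //= big1 ?addr0.
  rewrite coverM_U1 eqxx covM /=.
  set m := \big[Order.max/0]_(x | (x \in N) && (x.2 == e.2)) w x.
  set m' := \big[Order.max/0]_(x | (x \in e |: N) && (x.2 == e.2)) wn M w e x.
  have m0 : 0 <= m by apply: bigmax_ge_id.
  have wv0 : 0 <= wv by apply: gain_ge0 => //; exact: (iME I).
  rewrite /Fb; case: existsP => [[n /andP[nN n2]]|nex] /=.
    have wvn : wv <= w n := iG I nN ecand.
    have wnm : w n <= m by apply: le_bigmax_cond; rewrite nN.
    have m'm : m' <= m.
      apply: bigmax_le => // x /andP[]; rewrite in_setU1 => /orP[/eqP->|xN] x2.
        by rewrite ffunE eqxx; apply: le_trans wnm.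
      have xe : x != e by apply: contraNneq eN => <-.
      rewrite ffunE (negbTE xe); apply: le_bigmax_cond; by rewrite xN.
    have h1 : 0 <= (1 - p) * (m - m') by apply: mulr_ge0; rewrite subr_ge0.
    have h2 : 0 <= p * (m - wv) by apply: mulr_ge0; rewrite // subr_ge0; apply: le_trans wnm.
    lra.
  have m'v : m' <= wv.
    apply: bigmax_le => // x /andP[]; rewrite in_setU1 => /orP[/eqP->|xN] x2.
      by rewrite ffunE eqxx.
    by exfalso; apply: nex; exists x; rewrite xN x2.
  have h1 : 0 <= (1 - p) * (wv - m') by apply: mulr_ge0; rewrite subr_ge0.
  lra.
move=> r re; rewrite coverM_U1.
have er : (e.2 == r) = false by apply/negbTE; rewrite eq_sym.
rewrite er /=.
have -> : \big[Order.max/0]_(x | (x \in e |: N) && (x.2 == r)) wn M w e x =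
          \big[Order.max/0]_(x | (x \in N) && (x.2 == r)) w x.
  apply: eq_big => [x|x /andP[_ x2]].
    by rewrite in_setU1; case: (eqVneq x e) => [->|] //=; rewrite (negbTE eN) er.
  rewrite ffunE; case: eqP => // xe; move: x2; by rewrite xe er.
rewrite (eq_bigr (fun x => w x)); first by rewrite conv0.
move=> x /andP[xN _]; rewrite ffunE; case: eqP => // xe; move: eN; by rewrite -xe xN.
Qed.

Lemma dZ : p * Zf (e |: M) N + (1 - p) * Zf M (e |: N) - Zf M N = hv - p * wv.
Proof.
rewrite /Zf -setUA [M :|: (e |: N)]setUCA /hv /wv /gain; ring.
Qed.

Lemma phi_step (pq : 1 - p <= p) :
  Phi M N w h <= p * Phi (e |: M) N (wn M w e) (hn M N h e)
                 + (1 - p) * Phi M (e |: N) (wn M w e) (hn M N h e).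
Proof.
have HX := dX; have HY := dY; have HV := dV; have HZ := dZ.
have MNE : M :|: N \subset E by rewrite subUset (iME I) (iNE I).
have hw : hv <= wv by apply: gain_anti => //; exact: subsetUl.
have wv0 : 0 <= wv by apply: gain_ge0 => //; exact: (iME I).
have q0 : 0 <= 1 - p by rewrite subr_ge0.
have pq0 : 0 <= p - (1 - p) by rewrite subr_ge0.
rewrite /Phi.
move: HX HY HV HZ.
set XT := Xf (e |: M) N _; set XF := Xf M (e |: N) _; set X0 := Xf M N h.
set YT := Yf N _; set YF := Yf (e |: N) _; set Y0 := Yf N w.
set VT := Vf (e |: M) N _; set VF := Vf M (e |: N) _; set V0 := Vf M N w.
set ZT := Zf (e |: M) N; set ZF := Zf M (e |: N); set Z0 := Zf M N.
case: Fb => HX HY HV HZ.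
all: have P4 : p * (1 - p) * (p * ZT + (1 - p) * ZF - Z0) = p * (1 - p) * (hv - p * wv)
  by rewrite HZ.
  have P1 : 0 <= (1 - p) ^+ 2 * ((1 - p) * wv - (p * VT + (1 - p) * VF - V0)).
    by apply: mulr_ge0; [apply: sqr_ge0 | rewrite subr_ge0].
  have P2 : 0 <= (p - (1 - p)) * ((1 - p) * wv - (p * YT + (1 - p) * YF - Y0)).
    by apply: mulr_ge0; rewrite // subr_ge0.
  lra.
have P1 : 0 <= (1 - p) ^+ 2 * (- (p * wv) - (p * VT + (1 - p) * VF - V0)).
  by apply: mulr_ge0; [apply: sqr_ge0 | rewrite subr_ge0].
have P2 : 0 <= (p - (1 - p)) * (0 - (p * YT + (1 - p) * YF - Y0)).
  by apply: mulr_ge0; rewrite // subr_ge0.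
have P3 : 0 <= p * (1 - p) * (wv - hv).
  by apply: mulr_ge0; [apply: mulr_ge0 | rewrite subr_ge0].
lra.
Qed.

End Chosen.

Definition PhiS (sh : state R V1 V2 * {ffun T -> R}) : R :=
  let: ((M, N, W, w), h) := sh in Phi M N w h.

Lemma main_ind (pq : 1 - p <= p) n : forall M N W w h, Inv M N W w h ->
  Phi M N w h <= Ex p (fun c => PhiS (iter n (step2 c) (M, N, W, w, h))).
Proof.
elim: n => [|n IH] M N W w h I.
  by rewrite Ex_const.
case P: [pick e | is_choice f rank (M, N, W, w) e] => [e|]; last first.
  have Hs : forall c, step2 c (M, N, W, w, h) = (M, N, W, w, h).
    by move=> c; rewrite /step2 /= P.
  have -> : Ex p (fun c => PhiS (iter n.+1 (step2 c) (M, N, W, w, h)))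
          = Ex p (fun c => PhiS (iter n (step2 c) (M, N, W, w, h))).
    by apply: Ex_ext => c; rewrite iterSr Hs.
  exact: IH.
have Ce : is_choice f rank (M, N, W, w) e by move: P; case: pickP => // e' He' [<-].
have [IT IF] := inv_step I Ce.
have Hs : forall c, step2 c (M, N, W, w, h) =
   if c e.1 then (e |: M, N, Wn W e, wn M w e, hn M N h e)
   else (M, e |: N, Wn W e, wn M w e, hn M N h e).
  by move=> c; rewrite /step2 /= P; case: (c e.1).
have key : forall b sh, sh.1.1.2 = Wn W e ->
    (forall c, step2 (upd c e.1 b) (M, N, W, w, h) = sh) ->
    Ex p (fun c => PhiS (iter n.+1 (step2 (upd c e.1 b)) (M, N, W, w, h)))
    = Ex p (fun c => PhiS (iter n (step2 c) sh)).
  move=> b sh shW Hsh; apply: Ex_ext => c; rewrite iterSr Hsh.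
  congr PhiS; apply: iter_indep => x; rewrite shW inE => /andP[_ xe].
  by rewrite ffunE (negbTE xe).
rewrite (Ex_split p e.1).
rewrite (key true (e |: M, N, Wn W e, wn M w e, hn M N h e)) //; last first.
  by move=> c; rewrite Hs upd_at.
rewrite (key false (M, e |: N, Wn W e, wn M w e, hn M N h e)) //; last first.
  by move=> c; rewrite Hs upd_at.
apply: le_trans (phi_step I Ce pq) _.
apply: lerD; apply: ler_wpM2l; [done | exact: IH | rewrite subr_ge0 // | exact: IH].
Qed.

Lemma Phi_le M N W w h : Inv M N W w h ->
  Phi M N w h <= f (Sset N) - (p - (1 - p)) * Yf N w.
Proof.
move=> I.
have SN : Sset N \subset N by apply/subsetP => x; rewrite inE => /andP[].
have X1 : Xf M N h <= \sum_(x in Sset N) h x.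
  rewrite /Xf [X in _ <= X]big_mkcond; apply: ler_sum => x _.
  case xS: (x \in Sset N) => //; have xN := subsetP SN _ xS; have h0 := (iw I xN).2.
  case: (coverM M x.2) => //.
  have : 0 <= (1 - p) * h x by apply: mulr_ge0; rewrite // subr_ge0.
  lra.
have X2 : \sum_(x in Sset N) h x <= f (Sset N) - f set0.
  by apply: (iX I); apply: subset_trans SN (subsetUr _ _).
have f0 : 0 <= f set0 by apply: fpos; exact: sub0set.
have Z0 : 0 <= Zf M N.
  rewrite /Zf subr_ge0; apply: fmono; [exact: subsetUl | rewrite subUset (iME I) (iNE I) //].
have V0 : 0 <= Vf M N w.
  by apply: sumr_ge0 => r _; case: (coverM M r) => //; apply: bigmax_ge_id.
have P1 : 0 <= p * (1 - p) * Zf M N.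
  by apply: mulr_ge0 => //; apply: mulr_ge0; rewrite // subr_ge0.
have P2 : 0 <= (1 - p) ^+ 2 * Vf M N w by apply: mulr_ge0 => //; apply: sqr_ge0.
rewrite /Phi; lra.
Qed.

Lemma Inv_init : Inv set0 set0 E [ffun => 0] [ffun => 0].
Proof.
split => //; rewrite ?sub0set //.
- by move=> x a _; rewrite setU0 in_set0.
- by move=> a x; rewrite in_set0.
- by move=> a; rewrite in_set0.
- move=> X; rewrite setU0 subset0 => /eqP ->; rewrite big_set0 subrr //.
Qed.

Lemma Phi_init : Phi set0 set0 [ffun => 0] [ffun => 0] = 0.
Proof.
have S0 : Sset set0 = set0 by apply/setP => x; rewrite !inE.
rewrite /Phi /Xf /Yf /Vf /Zf S0 big_set0 setU0 subrr.
rewrite big1 => [|x _]; last by rewrite in_set0.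
rewrite big1 => [|r _]; last first.
  have -> : coverM set0 r = false by apply/negbTE/existsP => -[m]; rewrite in_set0.
  by rewrite big_pred0 // => x; rewrite in_set0.
by rewrite !mulr0 !subr0.
Qed.

Lemma Yf_ge0 M N W w h : Inv M N W w h -> 0 <= Yf N w.
Proof.
move=> I; apply: sumr_ge0 => x; rewrite inE => /andP[xN _]; exact: (iw I xN).1.
Qed.

Lemma fS_ge0 M N W w h : Inv M N W w h -> 0 <= f (Sset N).
Proof.
move=> I; apply: fpos; apply: subset_trans (iNE I).
by apply/subsetP => x; rewrite inE => /andP[].
Qed.

Definition init0 : state R V1 V2 * {ffun T -> R} :=
  (set0, set0, E, [ffun => 0], [ffun => 0]).

Lemma per_c c : exists M N W w h,
  [/\ iter #|E| (step2 c) init0 = (M, N, W, w, h), Inv M N W w h,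
      sim_N f rank E c = N & sim_w f rank E c = w].
Proof.
case Eq: (iter #|E| (step2 c) init0) => [[[[M N] W] w] h].
exists M, N, W, w, h.
have Hr := iter_step2_fst #|E| c init0; rewrite Eq /= in Hr.
have I := inv_iter #|E| c (sh := init0) Inv_init; rewrite Eq /= in I.
by split => //; rewrite /sim_N /sim_w /run -Hr.
Qed.

Lemma final_ineq (pq : 1 - p <= p) :
  (p - (1 - p)) * Ex p (fun c => Yf (sim_N f rank E c) (sim_w f rank E c))
  <= Ex p (fun c => f (Sset (sim_N f rank E c))).
Proof.
apply: le_trans (Ex_le p0 p1 (X := fun c => PhiS (iter #|E| (step2 c) init0)
   + (p - (1 - p)) * Yf (sim_N f rank E c) (sim_w f rank E c)) _).
  rewrite ExD ExZ lerDr.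
  by have := main_ind pq #|E| Inv_init; rewrite Phi_init.
move=> c; have [M [N [W [w [h [Eq I -> ->]]]]]] := per_c c.
rewrite Eq /=; have := Phi_le I; lra.
Qed.

Lemma final_pos :
  0 <= Ex p (fun c => f (Sset (sim_N f rank E c))) /\
  0 <= Ex p (fun c => Yf (sim_N f rank E c) (sim_w f rank E c)).
Proof.
split; rewrite -(Ex_const V1 p 0); apply: Ex_le => // c;
  have [M [N [W [w [h [Eq I eN ew]]]]]] := per_c c; rewrite eN ?ew.
  exact: fS_ge0 I.
exact: Yf_ge0 I.
Qed.

End Proc.
Lemma cube_le (R : realFieldType) (p : R) : 0 < p -> p <= 79/100 -> p^+3 < 1/2.
Proof.
move=> p0 p1.
have h1 : p * p <= 79/100 * (79/100) by apply: ler_pM => //; lra.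
have h2 : p * p * p <= 79/100 * (79/100) * (79/100) by apply: ler_pM => //; [nra|lra].
rewrite !exprS expr0 mulr1 mulrA; lra.
Qed.
Lemma h_ge (R : realFieldType) (p : R) : 79/100 <= p -> p <= 1 -> 1 - p <= p^+3 * (2 * p - 1).
Proof.
move=> p0 p1.
have h1 : 79/100 * (79/100) <= p * p by apply: ler_pM => //; lra.
have h2 : 79/100 * (79/100) * (79/100) <= p * p * p by apply: ler_pM => //; [nra|lra].
have h3 : 79/100 * (79/100) * (79/100) * (58/100) <= p * p * p * (2 * p - 1) by apply: ler_pM => //; [nra|nra|lra].
rewrite !exprS expr0 mulr1 mulrA; lra.
Qed.
Lemma polyg (R : realFieldType) (p t : R) : 0 < p -> p < 1 -> 0 < t -> 1 - p <= p ->
  0 <= t * (1 - p) * (t * p^+2 * (p - (1 - p)) + 1 - 2 * p^+3) + p.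
Proof.
move=> p0 p1 t0 pq.
set K := t * p^+2 * (p - (1 - p)) + 1 - 2 * p^+3.
have tq0 : 0 <= t * (1 - p) by apply: mulr_ge0; lra.
case: (lerP 0 K) => K0.
  have : 0 <= t * (1 - p) * K by apply: mulr_ge0.
  lra.
have A0 : 0 <= t * p^+2 * (p - (1 - p)) by apply: mulr_ge0; [apply: mulr_ge0; [lra| apply: exprn_ge0; lra]| lra].
have c3 : 1/2 < p^+3 by rewrite /K in K0; lra.
have p79 : 79/100 <= p.
  case: (lerP p (79/100)) => [H|H]; [have := @cube_le _ p p0 H; lra | exact: ltW].
have p3 : p^+3 <= 1.
  by apply: exprn_ile1; lra.
have Km : -1 <= K by rewrite /K; lra.
have H1 : 0 <= t * (1 - p) * (K + 1) by apply: mulr_ge0 => //; lra.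
have H2 : t * p^+2 * (2 * p - 1) <= 1 by rewrite /K in K0; lra.
have H3 := @h_ge _ p p79 (ltW p1).
have H4 : t * (1 - p) <= t * (p^+3 * (2 * p - 1)) by apply: ler_wpM2l; lra.
have H5 : t * (p^+3 * (2 * p - 1)) = p * (t * p^+2 * (2 * p - 1)) by rewrite exprS; ring.
have H6 : p * (t * p^+2 * (2 * p - 1)) <= p by rewrite -[X in _ <= X]mulr1; apply: ler_wpM2l; lra.
lra.
Qed.
Lemma coef_le (R : realFieldType) (p t : R) : 0 < p -> p < 1 -> 0 < t ->
  let alpha := p / (1 - p) in let theta := (t + alpha) / alpha in
  theta^-1 - (t * p ^+ 2)^-1 <= Num.max 0 (p - (1 - p)).
Proof.
move=> p0 p1 t0 /=.
have q0 : 0 < 1 - p by lra.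
have D1 : 0 < t * (1 - p) + p by have := mulr_gt0 t0 q0; lra.
have D2 : 0 < t * p ^+ 2 by apply: mulr_gt0 => //; apply: exprn_gt0.
have -> : ((t + p / (1 - p)) / (p / (1 - p)))^-1 = p / (t * (1 - p) + p).
  field.
  by rewrite ?(gt_eqF D1) ?(gt_eqF D2) ?(gt_eqF q0) ?(gt_eqF p0) ?(gt_eqF t0).
case: (lerP (1 - p) p) => pq.
  have -> : Num.max 0 (p - (1 - p)) = p - (1 - p) by apply/max_idPr; lra.
  have G := @polyg _ p t p0 p1 t0 pq.
  set g := t * (1 - p) * (t * p^+2 * (p - (1 - p)) + 1 - 2 * p^+3) + p in G.
  have E : p / (t * (1 - p) + p) - (t * p ^+ 2)^-1 - (p - (1 - p)) =
           - (g / ((t * (1 - p) + p) * (t * p ^+ 2))).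
    rewrite /g; field; by rewrite ?(gt_eqF D1) ?(gt_eqF D2) ?(gt_eqF q0) ?(gt_eqF p0) ?(gt_eqF t0).
  have : 0 <= g / ((t * (1 - p) + p) * (t * p ^+ 2)).
    by apply: divr_ge0 => //; apply: mulr_ge0; lra.
  lra.
have -> : Num.max 0 (p - (1 - p)) = 0 by apply/max_idPl; lra.
have E : p / (t * (1 - p) + p) - (t * p ^+ 2)^-1 =
         (p * (t * p^+2) - (t * (1 - p) + p)) / ((t * (1 - p) + p) * (t * p ^+ 2)).
  field; by rewrite ?(gt_eqF D1) ?(gt_eqF D2) ?(gt_eqF q0) ?(gt_eqF p0) ?(gt_eqF t0).
rewrite E; apply: mulr_le0_ge0; last first.
  by rewrite invr_ge0; apply: mulr_ge0; lra.
have h1 : p ^+ 2 <= 1 by apply: exprn_ile1; lra.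
have h2 : p * (t * p ^+ 2) <= p * t by rewrite -[X in _ <= X]mulr1 -mulrA; apply: ler_wpM2l; [lra|apply: ler_wpM2l; lra].
have h3 : p * t <= t * (1 - p) by rewrite mulrC; apply: ler_wpM2l; lra.
lra.
Qed.

Unset Implicit Arguments.

Theorem lemma11 (R : realFieldType) (V1 V2 : finType) (E : {set V1 * V2})
  (f : {set V1 * V2} -> R) (rank : V1 * V2 -> nat) (p t : R) :
  (forall A : {set V1 * V2}, A \subset E -> 0 <= f A) ->
  (forall A B : {set V1 * V2}, A \subset B -> B \subset E -> f A <= f B) ->
  (forall A B : {set V1 * V2}, A \subset E -> B \subset E -> f (A :|: B) + f (A :&: B) <= f A + f B) ->
  injective rank ->
  0 < p -> p < 1 -> 0 < t ->
  let alpha := p / (1 - p) in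
  let theta := (t + alpha) / alpha in
  Ex p (fun c => f (sim_S f rank E c)) >=
  (theta^-1 - (t * p ^+ 2)^-1) *
    Ex p (fun c => \sum_(e in sim_S f rank E c) sim_w f rank E c e).
Proof.
move=> fpos fmono fsub _ p0 p1 t0 /=.
have p0' : 0 <= p := ltW p0.
have p1' : p <= 1 := ltW p1.
have C := @coef_le R p t p0 p1 t0.
rewrite /= in C.
have -> : Ex p (fun c => f (sim_S f rank E c)) = Ex p (fun c => f (Sset (sim_N f rank E c))) by [].
have -> : Ex p (fun c => \sum_(e in sim_S f rank E c) sim_w f rank E c e)
        = Ex p (fun c => Yf (sim_N f rank E c) (sim_w f rank E c)) by [].
have [F0 Y0] := final_pos rank fpos fmono fsub p0' p1'.
set EF := Ex p _ in F0 *; set EY := Ex p _ in Y0 *.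

set c0 := _ - _.
have H1 : c0 * EY <= Num.max 0 (p - (1 - p)) * EY by apply: ler_wpM2r.
apply: le_trans H1 _.
case: (lerP (1 - p) p) => pq.
  have -> : Num.max 0 (p - (1 - p)) = p - (1 - p) by apply/max_idPr; rewrite subr_ge0.
  exact: (final_ineq rank fpos fmono fsub p0' p1' pq).
have -> : Num.max 0 (p - (1 - p)) = 0 by apply/max_idPl; rewrite subr_le0 ltW.
by rewrite mul0r.
Qed.
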